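(* Let $n,m$ be positive integers, $\lambda\in\mathcal{P}^m_n$, and let $k_{i,j}=k_{i,j}(\lambda)$ be defined recursively by $$k_{i,j}=\min\left\{m,\left\lceil\frac{\lambda_i-\sum_{\ell=j+1}^n k_{i,\ell}+\sum_{\ell=i+1}^j k_{\ell,j}}{j-i+1}\right\rceil\right\},\quad 1\le i\le j\le n.$$ Then $k_{i,j}\ge k_{i+1,j}$ for all $1\le i<j\le n$.
   Context: $\mathcal{P}^m_n$ is the set of integer partitions $(\lambda_1\ge\cdots\ge\lambda_n\ge0)$ with $\lambda_i\le m(n-i+1)$ for all $i$. The recursion is carried out in order of decreasing $i$ and, for fixed $i$, decreasing $j$. *)

(* Defs.v *)
From mathcomp Require Import all_boot all_order all_algebra.
Set Implicit Arguments. Unset Strict Implicit. Unset Printing Implicit Defensive.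
Import Order.TTheory GRing.Theory Num.Theory.
Local Open Scope ring_scope.

(* ceiling of a / d (intended for d > 0), via floor division of intdiv *)
Definition ceilz (a d : int) : int := - ((- a) %/ d)%Z.

(* lambda is given as lam : nat -> nat, with lam i = lambda_i for 1 <= i <= n *)
Definition in_Pmn (n m : nat) (lam : nat -> nat) : Prop :=
  (forall i, (1 <= i < n)%N -> (lam i.+1 <= lam i)%N) /\
  (forall i, (1 <= i <= n)%N -> (lam i <= m * (n - i + 1))%N).

Section K.
Variables (n m : nat) (lam : nat -> nat).

(* the defining formula for k_{i,j}, given the already computed entries
   r l = k_{i,l} (l > j) of row i and K l j = k_{l,j} (l > i) *)
Definition kform (K : nat -> nat -> int) (i : nat) (r : nat -> int) (j : nat)
  : int :=
  Order.min (m%:Z)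
    (ceilz ((lam i)%:Z - (\sum_(j.+1 <= l < n.+1) r l)
              + (\sum_(i.+1 <= l < j.+1) K l j))
           (j%:Z - i%:Z + 1)).

(* row i, computed for j = n, n-1, ..., n-d+1 (decreasing j) *)
Fixpoint krow (K : nat -> nat -> int) (i : nat) (d : nat) : nat -> int :=
  match d with
  | 0 => fun _ => 0
  | d'.+1 => let r := krow K i d' in
             fun j => if j == (n - d')%N then kform K i r j else r j
  end.

(* rows n, n-1, ..., n-e+1 (decreasing i) *)
Fixpoint ktab (e : nat) : nat -> nat -> int :=
  match e with
  | 0 => fun _ _ => 0
  | e'.+1 => let K := ktab e' in
             fun a b => if a == (n - e')%N then krow K (n - e') n.+1 b
                        else K a b
  end.

Definition kij (i j : nat) : int := ktab n i j.
End K.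

(* Main.v *)
Require Import Defs.
From mathcomp Require Import all_boot all_order all_algebra.
From mathcomp Require Import zify ring lra.
Import Order.TTheory GRing.Theory Num.Theory.
Local Open Scope ring_scope.

Lemma ceilz_le (b c x : int) : 0 < c -> (ceilz b c <= x) = (b <= x * c).
Proof.
move=> c0; rewrite /ceilz lerNl lez_divRL //.
by rewrite mulNr lerN2.
Qed.

Lemma ceilz_ge (b c x : int) : 0 < c -> (x <= ceilz b c) = ((x - 1) * c < b).
Proof.
move=> c0; rewrite /ceilz lerNr.
rewrite -ltzD1 ltz_divLR //.
have -> : (- x + 1) * c = - ((x - 1) * c) by ring.
by rewrite ltrN2.
Qed.

Lemma key (m a D d : int) :
  0 < d -> 0 <= D ->
  let x := Order.min m (ceilz a d) in
  let y := Order.min m (ceilz (a + x + D) (d + 1)) in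
  x <= y /\ y <= x + D.
Proof.
move=> d0 D0 x y.
have d1 : 0 < d + 1 by lia.
split.
- have hx : x <= ceilz a d by rewrite /x ge_min lexx orbT.
  rewrite /y le_min; apply/andP; split; first by rewrite /x ge_min lexx.
  move: hx; rewrite !ceilz_ge // => hx; nia.
- have hy : y <= ceilz (a + x + D) (d + 1) by rewrite /y ge_min lexx orbT.
  have hy2 : y <= m by rewrite /y ge_min lexx.
  move: hy hy2; rewrite /x; case: (leP m (ceilz a d)) => h hy hy2; first lia.
  have : ceilz (a + ceilz a d + D) (d + 1) <= ceilz a d + D.
    rewrite ceilz_le //.
    have : a <= ceilz a d * d by rewrite -ceilz_le.
    nia.
  lia.
Qed.

Section Rec.
Variables (n m : nat) (lam : nat -> nat).

Lemma ktab_eq e a b : (n - e < a <= n)%N ->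
  ktab n m lam e a b = krow n m lam (ktab n m lam (n - a)) a n.+1 b.
Proof.
elim: e a => [|e IH] a /=; first by lia.
move=> h; case: eqP => [ea|ne]; first by rewrite ea subKn //; lia.
by apply: IH; lia.
Qed.

Lemma krow_eq K i d l : (n - d < l <= n)%N ->
  krow n m lam K i d l = kform n m lam K i (krow n m lam K i (n - l)) l.
Proof.
elim: d l => [|d IH] l /=; first by lia.
move=> h; case: eqP => [ea|ne]; first by rewrite ea subKn //; lia.
by apply: IH; lia.
Qed.

Lemma kij_rec i j : (1 <= i <= j)%N -> (j <= n)%N ->
  kij n m lam i j = Order.min (m%:Z)
    (ceilz ((lam i)%:Z - (\sum_(j.+1 <= l < n.+1) kij n m lam i l)
              + (\sum_(i.+1 <= l < j.+1) kij n m lam l j))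
           (j%:Z - i%:Z + 1)).
Proof.
move=> hij hjn.
rewrite /kij ktab_eq; last by lia.
rewrite krow_eq; last by lia.
rewrite /kform.
congr (Order.min _ (ceilz (_ - _ + _) _)).
- apply: eq_big_nat => l hl.
  rewrite krow_eq; last by lia.
  rewrite ktab_eq; last by lia.
  rewrite krow_eq //; lia.
- apply: eq_big_nat => l hl.
  rewrite ktab_eq; last by lia.
  rewrite ktab_eq //; lia.
Qed.
End Rec.

Theorem lemma4p6 (n m : nat) (lam : nat -> nat) :
  (0 < n)%N -> (0 < m)%N -> in_Pmn n m lam ->
  forall i j : nat, (1 <= i)%N -> (i < j)%N -> (j <= n)%N ->
    kij n m lam i.+1 j <= kij n m lam i j.
Proof.
move=> n0 m0 [Hmono _] i j i1 ij jn.
pose S r j := \sum_(j.+1 <= l < n.+1) kij n m lam r l.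
pose D j := ((lam i)%:Z - S i j) - ((lam i.+1)%:Z - S i.+1 j).
have step : forall j, (i < j <= n)%N -> 0 <= D j ->
    kij n m lam i.+1 j <= kij n m lam i j /\
    kij n m lam i j <= kij n m lam i.+1 j + D j.
  move=> j' hj hD.
  rewrite (kij_rec n m lam i j'); [|lia|lia].
  rewrite (big_ltn (m := i.+1) (n := j'.+1)); last by lia.
  rewrite (kij_rec n m lam i.+1 j'); [|lia|lia].
  rewrite -/(S i j') -/(S i.+1 j').
  set x := Order.min _ _.
  have -> : (j'%:Z - i%:Z + 1) = (j'%:Z - (i.+1)%:Z + 1) + 1 by lia.
  have -> : (lam i)%:Z - S i j' + (x + \sum_(i.+2 <= l < j'.+1) kij n m lam l j')
     = ((lam i.+1)%:Z - S i.+1 j' + \sum_(i.+2 <= l < j'.+1) kij n m lam l j') + x + D j'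
    by rewrite /D; ring.
  apply: key => //; lia.
have Dpos : forall t, (t <= n - i.+1)%N -> 0 <= D (n - t)%N.
  elim=> [|t IH] ht.
    rewrite subn0 /D /S !big_geq // subr0 subr0 subr_ge0 lez_nat.
    apply: Hmono; lia.
  have e : (n - t = (n - t.+1).+1)%N by lia.
  have h1 : (i < (n - t.+1).+1 <= n)%N by lia.
  have IH' := IH (ltnW ht); rewrite e in IH'.
  have [_ h2] := step _ h1 IH'.
  have : D (n - t.+1)%N = D (n - t.+1).+1 - kij n m lam i (n - t.+1).+1
                          + kij n m lam i.+1 (n - t.+1).+1.
    rewrite /D /S (big_ltn (m := (n - t.+1).+1)); last by lia.
    rewrite (big_ltn (m := (n - t.+1).+1) (n := n.+1)); last by lia.
    ring.
  move=> ->; lia.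
have := step j; rewrite ij jn => /(_ isT).
have -> : j = (n - (n - j))%N by lia.
move=> /(_ (Dpos _ _)) [] //; lia.
Qed.
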